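(* Let $f\in\mathbb{R}[x_1,\dots,x_n]$ be a homogeneous polynomial of degree $3$ that is $\lambda$-bounded for some $\lambda>0$. Then $\max_{\|v\|=1} f(v)\le \lambda$, and moreover every degree-$4$ pseudo-expectation $\tilde{\mathbb{E}}$ on $\mathbb{R}[x]_{\le 4}$ satisfies $$\tilde{\mathbb{E}}\, f(x)\;\le\;\lambda\cdot\big(\tilde{\mathbb{E}}\,\|x\|^4\big)^{3/4}.$$
   Context: A degree-$d$ pseudo-expectation ($d$ even) is a linear functional $\tilde{\mathbb{E}}:\mathbb{R}[x]_{\le d}\to\mathbb{R}$ with $\tilde{\mathbb{E}}\,1=1$ and $\tilde{\mathbb{E}}\,p(x)^2\ge 0$ for every polynomial $p$ of degree at most $d/2$. A matrix $M\in\mathbb{R}^{n^2\times n^2}$ is a matrix representation of the homogeneous quartic $\|x\|^4$ if $\langle x^{\otimes 2}, M x^{\otimes 2}\rangle=\|x\|^4$ as polynomials. A homogeneous cubic $f$ is called $\lambda$-bounded if there exist matrices $A_1,\dots,A_n\in\mathbb{R}^{n\times n}$ with $f(x)=\sum_{i=1}^n x_i\langle x,A_i x\rangle$ and a matrix representation $M$ of $\|x\|^4$ such that $\sum_i A_i\otimes A_i\preceq \lambda^2 M$, i.e. $\langle u,(\lambda^2M-\sum_iA_i\otimes A_i)u\rangle\ge 0$ for all $u\in\mathbb{R}^{n^2}$. *)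

(* Defs.v *)
From HB Require Import structures.
From mathcomp Require Import all_boot all_order all_algebra.
Set Implicit Arguments. Unset Strict Implicit. Unset Printing Implicit Defensive.
Import Order.TTheory GRing.Theory Num.Theory.
Local Open Scope ring_scope.

Section SoSDefs.
Variable R : rcfType.

(* Flat index 'I_(m*n) <-> pairs 'I_m * 'I_n (inverse of mxvec_index). *)
Definition pair_of_index m n (k : 'I_(m * n)) : 'I_m * 'I_n :=
  enum_val (cast_ord (esym (mxvec_cast m n)) k).

Definition kron m1 n1 m2 n2 (A : 'M[R]_(m1, n1)) (B : 'M[R]_(m2, n2))
  : 'M[R]_(m1 * m2, n1 * n2) :=
  \matrix_(k, l) (A (pair_of_index k).1 (pair_of_index l).1 *
                  B (pair_of_index k).2 (pair_of_index l).2).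

Definition tens2 n (x : 'cV[R]_n) : 'cV[R]_(n * n) :=
  \col_k (x (pair_of_index k).1 0 * x (pair_of_index k).2 0).

Definition qform n (M : 'M[R]_n) (u : 'cV[R]_n) : R := (u^T *m M *m u) 0 0.

Definition sqnorm n (x : 'cV[R]_n) : R := \sum_i x i 0 ^+ 2.
Definition enorm n (x : 'cV[R]_n) : R := Num.sqrt (sqnorm x).

(* Polynomial functions R^n -> R of total degree at most d.  Over the reals,
   polynomials and polynomial functions are in bijection (degree-preserving). *)
Inductive polyfun n : nat -> ('cV[R]_n -> R) -> Prop :=
| pf_const d (c : R) : polyfun d (fun _ => c)
| pf_var d (i : 'I_n) : (1 <= d)%N -> polyfun d (fun x => x i 0)
| pf_add d p q : polyfun d p -> polyfun d q -> polyfun d (fun x => p x + q x)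
| pf_mul d e m p q : (d + e <= m)%N -> polyfun d p -> polyfun e q ->
                     polyfun m (fun x => p x * q x).

(* Degree-d pseudo-expectation: a linear functional on R[x]_{<= d}
   (modelled as a functional on functions, only its restriction to degree-<= d
   polynomial functions matters), normalized, and nonnegative on squares of
   polynomials of degree <= d/2. *)
Definition pseudo_expectation n (d : nat) (E : ('cV[R]_n -> R) -> R) : Prop :=
  [/\ forall (a b : R) p q, polyfun d p -> polyfun d q ->
        E (fun x => a * p x + b * q x) = a * E p + b * E q,
      E (fun _ => 1) = 1
    & forall p, polyfun d./2 p -> 0 <= E (fun x => p x ^+ 2)].

Definition represents_norm4 n (M : 'M[R]_(n * n)) : Prop :=
  forall x : 'cV[R]_n, qform M (tens2 x) = sqnorm x ^+ 2.

Definition lambda_bounded n (f : 'cV[R]_n -> R) (lam : R) : Prop :=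
  exists (A : 'I_n -> 'M[R]_n) (M : 'M[R]_(n * n)),
    [/\ forall x, f x = \sum_i x i 0 * qform (A i) x,
        represents_norm4 M
      & forall u : 'cV[R]_(n * n),
          0 <= qform (lam ^+ 2 *: M - \sum_i kron (A i) (A i)) u].

(* t^{3/4} for t >= 0. *)
Definition pow34 (t : R) : R := Num.sqrt t * Num.sqrt (Num.sqrt t).

End SoSDefs.

(* Main.v *)
Require Import Defs.
From HB Require Import structures.
From mathcomp Require Import all_boot all_order all_algebra.
From mathcomp Require Import ring lra.
From Stdlib Require Import FunctionalExtensionality.
Import Order.TTheory GRing.Theory Num.Theory.
Local Open Scope ring_scope.
Set Implicit Arguments. Unset Strict Implicit.

Lemma pf_mono (R : rcfType) (n d d' : nat) (p : 'cV[R]_n -> R) :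
  polyfun d p -> (d <= d')%N -> polyfun d' p.
Proof.
move=> H; elim: H d' => {d p}.
- by move=> d c d' _; apply: pf_const.
- by move=> d i Hd d' Hdd; apply: pf_var; apply: leq_trans Hdd.
- by move=> d p q _ IHp _ IHq d' Hdd; apply: pf_add; [apply: IHp|apply: IHq].
- move=> d e m p q Hm Hp _ Hq _ d' Hdd.
  by apply: (pf_mul (d:=d) (e:=e)) => //; apply: leq_trans Hdd.
Qed.

Lemma pf_ext (R : rcfType) (n d : nat) (p q : 'cV[R]_n -> R) :
  polyfun d p -> (forall x, p x = q x) -> polyfun d q.
Proof. by move=> H e; have -> : q = p by apply: functional_extensionality => x; rewrite e. Qed.

Lemma pf_mulD (R : rcfType) (n d e : nat) (p q : 'cV[R]_n -> R) :
  polyfun d p -> polyfun e q -> polyfun (d + e) (fun x => p x * q x).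
Proof. by move=> Hp Hq; apply: (pf_mul (d:=d) (e:=e)). Qed.

Lemma pf_scale (R : rcfType) (n d : nat) (c : R) (p : 'cV[R]_n -> R) :
  polyfun d p -> polyfun d (fun x => c * p x).
Proof. by move=> Hp; apply: (pf_mul (d:=0) (e:=d)) => //; apply: pf_const. Qed.

Lemma pf_sub (R : rcfType) (n d : nat) (p q : 'cV[R]_n -> R) :
  polyfun d p -> polyfun d q -> polyfun d (fun x => p x - q x).
Proof.
move=> Hp Hq; apply: (pf_ext (p := fun x => p x + (-1) * q x)); last by move=> x; rewrite mulN1r.
by apply: pf_add => //; apply: pf_scale.
Qed.

Lemma pf_sum_seq (R : rcfType) (n d : nat) (I : Type) (r : seq I) (F : I -> 'cV[R]_n -> R) :
  (forall i, polyfun d (F i)) -> polyfun d (fun x => \sum_(i <- r) F i x).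
Proof.
move=> H; elim: r => [|a r IH].
  by apply: (pf_ext (p := fun _ => 0)); [apply: pf_const| move=> x; rewrite big_nil].
by apply: (pf_ext (p := fun x => F a x + \sum_(i <- r) F i x)); [apply: pf_add|move=> x; rewrite big_cons].
Qed.

Lemma pf_sum (R : rcfType) (n d : nat) (I : finType) (F : I -> 'cV[R]_n -> R) :
  (forall i, polyfun d (F i)) -> polyfun d (fun x => \sum_i F i x).
Proof. by move=> H; exact: (pf_sum_seq (index_enum I) H). Qed.

Lemma pf_sq (R : rcfType) (n : nat) (p : 'cV[R]_n -> R) :
  polyfun 2 p -> polyfun 4 (fun x => p x ^+ 2).
Proof. by move=> H; apply: (pf_ext (pf_mulD H H)) => x; rewrite expr2. Qed.

Lemma E_ext (R : rcfType) (n : nat) (E : ('cV[R]_n -> R) -> R) (p q : 'cV[R]_n -> R) :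
  (forall x, p x = q x) -> E p = E q.
Proof. by move=> e; congr E; apply: functional_extensionality. Qed.

Lemma E_lin (R : rcfType) (n : nat) (E : ('cV[R]_n -> R) -> R) a b p q :
  pseudo_expectation 4 E -> polyfun 4 p -> polyfun 4 q ->
  E (fun x => a * p x + b * q x) = a * E p + b * E q.
Proof. by case=> L _ _; apply: L. Qed.

Lemma E_add (R : rcfType) (n : nat) (E : ('cV[R]_n -> R) -> R) p q :
  pseudo_expectation 4 E -> polyfun 4 p -> polyfun 4 q ->
  E (fun x => p x + q x) = E p + E q.
Proof.
move=> HE Hp Hq; rewrite -[E p]mul1r -[E q]mul1r -E_lin //.
by apply: E_ext => x; rewrite !mul1r.
Qed.

Lemma E_scale (R : rcfType) (n : nat) (E : ('cV[R]_n -> R) -> R) a p :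
  pseudo_expectation 4 E -> polyfun 4 p ->
  E (fun x => a * p x) = a * E p.
Proof.
move=> HE Hp; rewrite -[a * E p]addr0 -[X in _ + X](mul0r (E p)) -E_lin //.
by apply: E_ext => x; rewrite mul0r addr0.
Qed.

Lemma E_sub (R : rcfType) (n : nat) (E : ('cV[R]_n -> R) -> R) p q :
  pseudo_expectation 4 E -> polyfun 4 p -> polyfun 4 q ->
  E (fun x => p x - q x) = E p - E q.
Proof.
move=> HE Hp Hq; rewrite -[E p]mul1r -mulN1r -E_lin //.
by apply: E_ext => x; rewrite mul1r mulN1r.
Qed.

Lemma E_const (R : rcfType) (n : nat) (E : ('cV[R]_n -> R) -> R) c :
  pseudo_expectation 4 E -> E (fun _ => c) = c.
Proof.
move=> HE; have H1 := HE; case: H1 => _ E1 _.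
transitivity (c * E (fun _ => 1)); last by rewrite E1 mulr1.
rewrite -E_scale //; last exact: pf_const.
by apply: E_ext => x; rewrite mulr1.
Qed.

Lemma E_sum (R : rcfType) (n : nat) (E : ('cV[R]_n -> R) -> R) (I : finType) (F : I -> 'cV[R]_n -> R) :
  pseudo_expectation 4 E -> (forall i, polyfun 4 (F i)) ->
  E (fun x => \sum_i F i x) = \sum_i E (F i).
Proof.
move=> HE H.
have: forall r : seq I, E (fun x => \sum_(i <- r) F i x) = \sum_(i <- r) E (F i).
  elim=> [|a r IH].
    rewrite big_nil; transitivity (E (fun _ => 0)); last exact: E_const.
    by apply: E_ext => x; rewrite big_nil.
  rewrite big_cons -IH -E_add //; last exact: pf_sum_seq.
  by apply: E_ext => x; rewrite big_cons.
move=> /(_ (index_enum I)); exact.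
Qed.

Lemma E_sq (R : rcfType) (n : nat) (E : ('cV[R]_n -> R) -> R) p :
  pseudo_expectation 4 E -> polyfun 2 p -> 0 <= E (fun x => p x ^+ 2).
Proof. by case=> _ _ H; apply: H. Qed.

Definition Qf (R : rcfType) N (c : 'I_N -> 'I_N -> R) (v : 'I_N -> R) : R :=
  \sum_k \sum_l c k l * v k * v l.

Lemma sum_delta (R : rcfType) N (F : 'I_N -> R) (b : 'I_N) :
  \sum_l F l * (l == b)%:R = F b.
Proof.
rewrite (bigD1 b) //= eqxx mulr1 big1 ?addr0 // => l /negbTE ->; by rewrite mulr0.
Qed.

Lemma Qf_pert (R : rcfType) N (c : 'I_N -> 'I_N -> R) (p q : 'I_N) (t : R) :
  Qf c (fun k => t * (k == p)%:R + (k == q)%:R) =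
  t ^+ 2 * c p p + t * (c p q + c q p) + c q q.
Proof.
rewrite /Qf.
transitivity (\sum_k \sum_l (t ^+ 2 * (c k l * (k == p)%:R * (l == p)%:R)
   + t * (c k l * (k == p)%:R * (l == q)%:R) + t * (c k l * (k == q)%:R * (l == p)%:R)
   + c k l * (k == q)%:R * (l == q)%:R)).
  by apply: eq_bigr => k _; apply: eq_bigr => l _; ring.
under eq_bigr do rewrite !big_split /=.
rewrite !big_split /=.
have E2 : forall a b, \sum_(k < N) \sum_(l < N) c k l * (k == a)%:R * (l == b)%:R = c a b.
  move=> a b; under eq_bigr do rewrite sum_delta.
  by rewrite -(sum_delta (fun k => c k b) a); apply: eq_bigr => k _; rewrite mulrC.
have M2 : forall (a : R) (F : 'I_N -> 'I_N -> R), \sum_k \sum_l a * F k l = a * \sum_k \sum_l F k l.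
  by move=> a F; rewrite mulr_sumr; apply: eq_bigr => k _; rewrite mulr_sumr.
rewrite !M2 !E2; ring.
Qed.

Lemma psd_diag (R : rcfType) N (c : 'I_N -> 'I_N -> R) p :
  (forall u, 0 <= Qf c u) -> 0 <= c p p.
Proof.
move=> H; have := H (fun k => 0 * (k == p)%:R + (k == p)%:R).
by rewrite Qf_pert; rewrite expr2 !mul0r !add0r.
Qed.

Lemma psd_zero_row (R : rcfType) N (c : 'I_N -> 'I_N -> R) p q :
  (forall k l, c k l = c l k) -> (forall u, 0 <= Qf c u) -> c p p = 0 -> c p q = 0.
Proof.
move=> Hs H Hp; apply/eqP; apply/negPn/negP => Hn.
have Hq := psd_diag q H.
have := H (fun k => (- (c q q + 1) / (2 * c p q)) * (k == p)%:R + (k == q)%:R).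
rewrite Qf_pert Hp (Hs q p) mulr0 add0r.
have -> : - (c q q + 1) / (2 * c p q) * (c p q + c p q) = - (c q q + 1).
  by field.
lra.
Qed.

Definition schur (R : rcfType) N (c : 'I_N -> 'I_N -> R) (p : 'I_N) k l :=
  c k l - c k p * c p l / c p p.

Lemma Qf_schur (R : rcfType) N (c : 'I_N -> 'I_N -> R) p v :
  (forall k l, c k l = c l k) ->
  Qf c v = Qf (schur c p) v + (\sum_k c p k * v k) ^+ 2 / c p p.
Proof.
move=> Hs; rewrite /Qf /schur.
have -> : (\sum_k c p k * v k) ^+ 2 / c p p =
   \sum_k \sum_l c k p * c p l / c p p * v k * v l.
  rewrite expr2 -mulrA mulr_suml; apply: eq_bigr => k _.
  rewrite mulr_suml mulr_sumr; apply: eq_bigr => l _.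
  rewrite (Hs k p); ring.
rewrite -big_split /=; apply: eq_bigr => k _; rewrite -big_split /=.
by apply: eq_bigr => l _; ring.
Qed.

Lemma schur_psd (R : rcfType) N (c : 'I_N -> 'I_N -> R) p :
  (forall k l, c k l = c l k) -> (forall u, 0 <= Qf c u) -> 0 < c p p ->
  forall u, 0 <= Qf (schur c p) u.
Proof.
move=> Hs H Ha u.
pose S := \sum_l c p l * u l.
pose w := fun k => u k - (k == p)%:R * (S / c p p).
have Hrow : forall l, schur c p p l = 0.
  by move=> l; rewrite /schur; field; rewrite gt_eqF.
have Hcol : forall k, schur c p k p = 0.
  by move=> k; rewrite /schur; field; rewrite gt_eqF.
have Ew : Qf (schur c p) w = Qf (schur c p) u.
  rewrite /Qf; apply: eq_bigr => k _; apply: eq_bigr => l _.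
  case: (eqVneq k p) => [->|hk]; first by rewrite Hrow !mul0r.
  case: (eqVneq l p) => [->|hl]; first by rewrite Hcol !mul0r.
  by rewrite /w (negbTE hk) (negbTE hl) !mul0r !subr0.
have L0 : \sum_k c p k * w k = 0.
  rewrite /w.
  under eq_bigr do rewrite mulrBr.
  rewrite sumrB.
  have -> : \sum_i c p i * ((i == p)%:R * (S / c p p)) = c p p * (S / c p p).
    by rewrite -(sum_delta (fun i => c p i) p) mulr_suml; apply: eq_bigr => i _; ring.
  by rewrite /S; field; rewrite gt_eqF.
have := H w; rewrite (Qf_schur p w Hs) L0 expr2 mul0r mul0r addr0 Ew //.
Qed.

Lemma psdE (R : rcfType) n (E : ('cV[R]_n -> R) -> R) N (y : 'I_N -> 'cV[R]_n -> R)
  (c : 'I_N -> 'I_N -> R) :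
  pseudo_expectation 4 E -> (forall k, polyfun 2 (y k)) -> (forall k l, c k l = c l k) ->
  (forall u, 0 <= Qf c u) -> 0 <= E (fun x => Qf c (fun k => y k x)).
Proof.
move=> HE Hy.
have pfQ : forall c', polyfun 4 (fun x => Qf c' (fun k => y k x)).
  move=> c'; apply: pf_sum => k; apply: pf_sum => l.
  apply: (pf_mulD (d := 2) (e := 2)); last exact: Hy.
  exact: pf_scale.
suff: forall (m : nat) (c : 'I_N -> 'I_N -> R), (forall k l : 'I_N, (m <= k)%N -> c k l = 0) -> (forall k l, c k l = c l k) ->
  (forall u, 0 <= Qf c u) -> 0 <= E (fun x => Qf c (fun k => y k x)).
  by move=> /(_ N c) H; apply: H => k l; rewrite leqNgt ltn_ord.
elim=> [|m IH] {}c Hsupp Hs H.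
  rewrite (E_ext E (q := fun _ => 0)) ?E_const // => x.
  by rewrite /Qf big1 // => k _; rewrite big1 // => l _; rewrite Hsupp // !mul0r.
case: (ltnP m N) => HmN; last first.
  by apply: IH => // k l Hk; move: (ltn_ord k); rewrite ltnNge (leq_trans HmN Hk).
pose p := Ordinal HmN.
have Hpp := psd_diag p H.
case: (eqVneq (c p p) 0) => Ha.
  apply: IH => // k l Hk; case: (eqVneq k p) => [->|hk].
    exact: psd_zero_row.
  apply: Hsupp; rewrite ltn_neqAle Hk andbT; apply: contra hk => /eqP e.
  by apply/eqP/val_inj; rewrite /= e.
have Ha' : 0 < c p p by rewrite lt_def Ha Hpp.
rewrite (E_ext E (q := fun x => Qf (schur c p) (fun k => y k x) +
    (c p p)^-1 * (\sum_k c p k * y k x) ^+ 2)); last first.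
  by move=> x; rewrite (Qf_schur p _ Hs) mulrC.
have pfL : polyfun 2 (fun x => \sum_k c p k * y k x).
  by apply: pf_sum => k; apply: pf_scale.
rewrite E_add //; last by apply: pf_scale; apply: pf_sq.
rewrite E_scale //; last by apply: pf_sq.
apply: addr_ge0; last by apply: mulr_ge0; [rewrite invr_ge0 | apply: E_sq].
apply: IH.
- move=> k l Hk; rewrite /schur; case: (eqVneq k p) => [->|hk].
    by field.
  have Hk' : (m.+1 <= k)%N.
    rewrite ltn_neqAle Hk andbT; apply: contra hk => /eqP e.
    by apply/eqP/val_inj; rewrite /= e.
  by rewrite (Hsupp k l) ?(Hsupp k p) // !mul0r subr0.
- by move=> k l; rewrite /schur Hs (Hs k p) (Hs p l); ring.
- exact: schur_psd.
Qed.

Lemma sum_pair (R : rcfType) n (F : 'I_n * 'I_n -> R) :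
  \sum_(k < n * n) F (pair_of_index k) = \sum_i \sum_j F (i, j).
Proof.
rewrite pair_bigA /=; symmetry.
rewrite (reindex (@pair_of_index n n)) /=.
  by apply: eq_bigr => k _; rewrite -surjective_pairing.
exists (fun p => cast_ord (mxvec_cast n n) (enum_rank p)) => k _.
  by rewrite /pair_of_index enum_valK cast_ordKV.
by rewrite /pair_of_index cast_ordK enum_rankK.
Qed.

Lemma qformE (R : rcfType) n (M : 'M[R]_n) u :
  qform M u = \sum_k \sum_l M k l * u k 0 * u l 0.
Proof.
rewrite /qform mxE exchange_big /=; apply: eq_bigr => l _.
rewrite mxE mulr_suml; apply: eq_bigr => k _.
by rewrite !mxE [_ * M k l]mulrC.
Qed.

Lemma qform_kron (R : rcfType) n (A B : 'M[R]_n) x :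
  qform (kron A B) (tens2 x) = qform A x * qform B x.
Proof.
rewrite qformE.
under eq_bigr do under eq_bigr do rewrite !mxE.
rewrite (sum_pair (fun p => \sum_(l < n * n) A p.1 (pair_of_index l).1 * B p.2 (pair_of_index l).2 *
          (x p.1 0 * x p.2 0) * (x (pair_of_index l).1 0 * x (pair_of_index l).2 0))) /=.
under eq_bigr do under eq_bigr do rewrite (sum_pair (fun q => A _ q.1 * B _ q.2 *
          (x _ 0 * x _ 0) * (x q.1 0 * x q.2 0))) /=.
rewrite !qformE mulr_suml; apply: eq_bigr => i1 _.
rewrite mulr_suml exchange_big /=; apply: eq_bigr => i2 _.
rewrite mulr_sumr; apply: eq_bigr => k _.
rewrite mulr_sumr; apply: eq_bigr => l _.
ring.
Qed.

Lemma qform_lin (R : rcfType) N (a : R) (M : 'M[R]_N) (I : finType) (K : I -> 'M[R]_N) u :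
  qform (a *: M - \sum_i K i) u = a * qform M u - \sum_i qform (K i) u.
Proof.
have -> : \sum_i qform (K i) u = \sum_k \sum_l (\sum_i K i k l) * u k 0 * u l 0.
  under eq_bigr do rewrite qformE.
  rewrite exchange_big; apply: eq_bigr => k _; rewrite exchange_big; apply: eq_bigr => l _.
  by rewrite !mulr_suml.
rewrite !qformE mulr_sumr -sumrB; apply: eq_bigr => k _.
rewrite mulr_sumr -sumrB; apply: eq_bigr => l _.
rewrite !mxE summxE; ring.
Qed.

Lemma pf_qform (R : rcfType) n (M : 'M[R]_n) : polyfun 2 (fun x => qform M x).
Proof.
apply: (pf_ext (p := fun x => \sum_k \sum_l M k l * x k 0 * x l 0)); last by move=> x; rewrite qformE.
apply: pf_sum => k; apply: pf_sum => l.
apply: (pf_mulD (d := 1) (e := 1)); last exact: pf_var.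
by apply: pf_scale; apply: pf_var.
Qed.

Lemma pf_sqnorm (R : rcfType) n : polyfun 2 (fun x : 'cV[R]_n => sqnorm x).
Proof.
apply: pf_sum => i; apply: (pf_ext (pf_mulD (d := 1) (e := 1) (pf_var _ i _) (pf_var _ i _))) => //.
Qed.

Lemma E_lin3 (R : rcfType) (n : nat) (E : ('cV[R]_n -> R) -> R) a b c p q r :
  pseudo_expectation 4 E -> polyfun 4 p -> polyfun 4 q -> polyfun 4 r ->
  E (fun x => a * p x + b * q x + c * r x) = a * E p + b * E q + c * E r.
Proof.
move=> HE Hp Hq Hr.
rewrite (E_add (p := fun x => a * p x + b * q x) (q := fun x => c * r x)) //.
- by rewrite E_lin // E_scale.
- by apply: pf_add; apply: pf_scale.
- by apply: pf_scale.
Qed.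

Lemma part2 (R : rcfType) (n : nat) (f : 'cV[R]_n -> R) (lam : R)
  (E : ('cV[R]_n -> R) -> R) :
  0 < lam -> lambda_bounded f lam -> pseudo_expectation 4 E ->
  E f <= lam * pow34 (E (fun x => sqnorm x ^+ 2)).
Proof.
move=> Hlam [A [M [Hf HM Hpsd]]] HE.
pose w i (x : 'cV[R]_n) := qform (A i) x.
have pfw : forall i, polyfun 2 (w i) by move=> i; exact: pf_qform.
have pfs := @pf_sqnorm R n.
have pfxw : polyfun 4 (fun x => \sum_i x i 0 * w i x).
  apply: pf_sum => i; apply: (pf_mono (d := 1 + 2)) => //.
  by apply: pf_mulD => //; apply: pf_var.
have pfww : polyfun 4 (fun x => \sum_i w i x ^+ 2).
  by apply: pf_sum => i; apply: pf_sq.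
set T := E (fun x => sqnorm x ^+ 2).
set A0 := E (fun x => sqnorm x).
set F := E (fun x => \sum_i x i 0 * w i x).
set B := E (fun x => \sum_i w i x ^+ 2).
have EF : E f = F by apply: E_ext => x; rewrite Hf.
have T0 : 0 <= T by apply: E_sq.
have HA : A0 ^+ 2 <= T.
  have := E_sq HE (pf_sub pfs (pf_const n 2 A0)).
  rewrite (E_ext E (q := fun x => 1 * (sqnorm x ^+ 2) + (- (2 * A0)) * sqnorm x + A0 ^+ 2 * 1)); last first.
    by move=> x; ring.
  rewrite E_lin3 //; last exact: pf_const.
    rewrite E_const //; change (E (sqnorm (n:=n))) with A0; rewrite -/T => h; nra.
  exact: (pf_sq pfs).
  exact: (pf_mono pfs).
have HB : B <= lam ^+ 2 * T.
  pose P := lam ^+ 2 *: M - \sum_i kron (A i) (A i).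
  pose cs := fun k l : 'I_(n * n) => (P k l + P l k) / 2.
  have Qsym : forall v, Qf cs v = Qf (fun k l => P k l) v.
    move=> v; rewrite /Qf /cs.
    transitivity (\sum_k \sum_l (P k l * v k * v l + P l k * v k * v l) / 2).
      by apply: eq_bigr => k _; apply: eq_bigr => l _; ring.
    under eq_bigr do rewrite -mulr_suml big_split /=.
    rewrite -mulr_suml big_split /= [X in _ + X] exchange_big /=.
    have -> : \sum_j \sum_i P j i * v i * v j = \sum_k \sum_l P k l * v k * v l.
      by apply: eq_bigr => k _; apply: eq_bigr => l _; ring.
    by field.
  have H := psdE (y := fun k x => tens2 x k 0) (c := cs) HE.
  have H2 : 0 <= E (fun x => Qf cs (fun k => tens2 x k 0)).
    apply: H.
    - move=> k; apply: (pf_ext (pf_mulD (d := 1) (e := 1) (pf_var _ (pair_of_index k).1 _) (pf_var _ (pair_of_index k).2 _))) => //.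
      by move=> x; rewrite mxE.
    - by move=> k l; rewrite /cs addrC.
    - move=> u; rewrite Qsym (_ : Qf _ u = qform P (\col_k u k)); first exact: Hpsd.
      by rewrite qformE; apply: eq_bigr => k _; apply: eq_bigr => l _; rewrite !mxE.
  rewrite (E_ext E (q := fun x => lam ^+ 2 * (sqnorm x ^+ 2) - \sum_i w i x ^+ 2)) in H2; last first.
    move=> x; rewrite Qsym.
    have -> : Qf (fun k l => P k l) (fun k => tens2 x k 0) = qform P (tens2 x) by rewrite qformE.
    rewrite qform_lin HM; congr (_ - _); apply: eq_bigr => i _.
    by rewrite qform_kron expr2.
  rewrite E_sub // ?E_scale // in H2; first by rewrite -/T -/B in H2; lra.
  - exact: (pf_sq pfs).
  - by apply: pf_scale; exact: (pf_sq pfs).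
have CS : forall al be : R, 0 <= al ^+ 2 * A0 + (- (2 * al * be)) * F + be ^+ 2 * B.
  move=> al be.
  have pfg : forall i, polyfun 2 (fun x => al * x i 0 - be * w i x).
    move=> i; apply: pf_sub; apply: pf_scale => //.
    exact: (pf_var _ i (isT : (1 <= 2)%N)).
  have H0 : 0 <= E (fun x => \sum_i (al * x i 0 - be * w i x) ^+ 2).
    rewrite E_sum //; last by move=> i; apply: pf_sq.
    by apply: sumr_ge0 => i _; apply: E_sq.
  rewrite (E_ext E (q := fun x => al ^+ 2 * sqnorm x + (- (2 * al * be)) * (\sum_i x i 0 * w i x)
        + be ^+ 2 * (\sum_i w i x ^+ 2))) in H0; last first.
    move=> x; rewrite /sqnorm !mulr_sumr -!big_split /=; apply: eq_bigr => i _; ring.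
  by rewrite E_lin3 // in H0; exact: (pf_mono pfs).
rewrite EF /pow34 -/T.
set r := Num.sqrt (Num.sqrt T).
have sT0 : 0 <= Num.sqrt T by apply: sqrtr_ge0.
have r0 : 0 <= r by apply: sqrtr_ge0.
have r2 : r ^+ 2 = Num.sqrt T by rewrite sqr_sqrtr.
have r4 : Num.sqrt T ^+ 2 = T by rewrite sqr_sqrtr.
have HA' : A0 <= r ^+ 2 by rewrite r2; nra.
have HB' : B <= lam ^+ 2 * r ^+ 2 ^+ 2 by rewrite r2 r4.
rewrite -r2.
case: (eqVneq r 0) => [r00|rn0].
  have := CS 1 1; rewrite r00 in HA' HB' *; rewrite !expr2 !mul0r !mulr0 in HA' HB' *; lra.
have rp : 0 < r by rewrite lt_def rn0 r0.
have := CS (lam * r ^+ 2) r.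
set s := lam * (r ^+ 2 * r).
have sp : 0 < s by rewrite /s !mulr_gt0 // exprn_gt0.
have e1 : (lam * r ^+ 2) ^+ 2 * A0 <= s ^+ 2.
  rewrite /s; have -> : (lam * (r ^+ 2 * r)) ^+ 2 = (lam * r ^+ 2) ^+ 2 * r ^+ 2 by ring.
  by apply: ler_wpM2l => //; apply: sqr_ge0.
have e2 : r ^+ 2 * B <= s ^+ 2.
  rewrite /s; have -> : (lam * (r ^+ 2 * r)) ^+ 2 = r ^+ 2 * (lam ^+ 2 * r ^+ 2 ^+ 2) by ring.
  by apply: ler_wpM2l => //; apply: sqr_ge0.
have -> : - (2 * (lam * r ^+ 2) * r) * F = - (2 * s) * F by rewrite /s; ring.
move=> h.
have h2 : s * F <= s * s by rewrite -expr2; lra.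
by rewrite -(ler_pM2l sp).
Qed.

Unset Implicit Arguments.
Set Strict Implicit.

Theorem mainTheorem1 (R : rcfType) (n : nat) (f : 'cV[R]_n -> R) (lam : R) :
  0 < lam ->
  polyfun 3 f -> (forall (t : R) x, f (t *: x) = t ^+ 3 * f x) ->
  lambda_bounded f lam ->
  (forall v : 'cV[R]_n, enorm v = 1 -> f v <= lam) /\
  (forall E : ('cV[R]_n -> R) -> R, pseudo_expectation 4 E ->
     E f <= lam * pow34 (E (fun x => sqnorm x ^+ 2))).
Proof.
move=> Hlam _ _ Hb; split; last by move=> E HE; apply: part2.
move=> v Hv.
have HE : pseudo_expectation 4 (fun g : 'cV[R]_n -> R => g v).
  by split => // p _; apply: sqr_ge0.
have := part2 Hlam Hb HE => /=.
have s1 : sqnorm v = 1.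
  have s0 : 0 <= sqnorm v by apply: sumr_ge0 => i _; apply: sqr_ge0.
  by rewrite -(sqr_sqrtr s0) -/(enorm v) Hv expr1n.
by rewrite s1 expr1n /pow34 !sqrtr1 !mulr1.
Qed.
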